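(* Let $f,g:\mathbb{R}\to\mathbb{R}$ be $\mathcal{C}^2$ functions such that $f''(u)\ge c_0$ and $g''(u)\ge c_0$ for some $c_0>0$ and all $u\in\mathbb{R}$, and $f(u)>g(u)$ for all $u\in\mathbb{R}$. Let $u^-<u^+$ be real numbers (an upward jump) and $\theta^-,\theta^+\in\{0,1\}$, and let $$\lambda=\frac{[\theta^+f(u^+)+(1-\theta^+)g(u^+)]-[\theta^-f(u^-)+(1-\theta^-)g(u^-)]}{u^+-u^-}$$ be the Rankine–Hugoniot speed. Then the Lax admissibility conditions $$\theta^+f'(u^+)+(1-\theta^+)g'(u^+)\;\le\;\lambda\;\le\;\theta^-f'(u^-)+(1-\theta^-)g'(u^-)$$ are violated, i.e. at least one of these two inequalities fails.
   Context: This concerns jumps of weak solutions of the conservation law $u_t+[\theta(u_x)f(u)+(1-\theta(u_x))g(u)]_x=0$, where $\theta(s)=1$ for $s>0$ and $\theta(s)=0$ for $s<0$. A jump connects a left state $(u^-,\theta^-)$ to a right state $(u^+,\theta^+)$, traveling with the Rankine–Hugoniot speed $\lambda$ given in the claim. *)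

(* Defs.v *)
From Stdlib Require Import Reals.
From Coquelicot Require Import Coquelicot.
Open Scope R_scope.

Definition C2_with (f df d2f : R -> R) : Prop :=
  (forall x, is_derive f x (df x)) /\
  (forall x, is_derive df x (d2f x)) /\
  (forall x, continuous d2f x).

Definition mixflux (f g : R -> R) (theta u : R) : R :=
  theta * f u + (1 - theta) * g u.

(* Main.v *)
Require Import Defs.
From Stdlib Require Import Reals Lra Psatz.
From Coquelicot Require Import Coquelicot.
Open Scope R_scope.

Lemma incr_d (dF d2F : R -> R) :
  (forall x, is_derive dF x (d2F x)) -> (forall x, d2F x > 0) ->
  forall a b, a < b -> dF a < dF b.
Proof.
  intros H2 Hp a b Hab.
  destruct (MVT_cor2 dF d2F a b Hab) as [c [Hc _]].
  { intros c _. apply is_derive_Reals. apply H2. }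
  specialize (Hp c). nra.
Qed.

Lemma key (F dF d2F : R -> R) :
  (forall x, is_derive F x (dF x)) -> (forall x, is_derive dF x (d2F x)) ->
  (forall x, d2F x > 0) -> forall a b, a < b ->
  dF a * (b - a) < F b - F a /\ F b - F a < dF b * (b - a).
Proof.
  intros H1 H2 Hp a b Hab.
  destruct (MVT_cor2 F dF a b Hab) as [c [Hc [Hac Hcb]]].
  { intros c _. apply is_derive_Reals. apply H1. }
  pose proof (incr_d dF d2F H2 Hp a c Hac).
  pose proof (incr_d dF d2F H2 Hp c b Hcb).
  rewrite Hc. split; nra.
Qed.

Theorem lemma2p1 (f g df dg d2f d2g : R -> R) (c0 : R)
  (Hf : C2_with f df d2f) (Hg : C2_with g dg d2g)
  (Hc0 : 0 < c0)
  (Hf2 : forall u, d2f u >= c0) (Hg2 : forall u, d2g u >= c0)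
  (Hfg : forall u, f u > g u)
  (um up thm thp : R) (Hu : um < up)
  (Hthm : thm = 0 \/ thm = 1) (Hthp : thp = 0 \/ thp = 1) :
  let lambda := (mixflux f g thp up - mixflux f g thm um) / (up - um) in
  ~ (mixflux df dg thp up <= lambda /\ lambda <= mixflux df dg thm um).
Proof.
  intros lambda [L1 L2].
  destruct Hf as [Hf1 [Hf2' _]]. destruct Hg as [Hg1 [Hg2' _]].
  assert (Pf : forall x, d2f x > 0) by (intro x; specialize (Hf2 x); lra).
  assert (Pg : forall x, d2g x > 0) by (intro x; specialize (Hg2 x); lra).
  destruct (key f df d2f Hf1 Hf2' Pf um up Hu) as [Kf1 Kf2].
  destruct (key g dg d2g Hg1 Hg2' Pg um up Hu) as [Kg1 Kg2].
  assert (Hd : up - um > 0) by lra.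
  assert (Hl : lambda * (up - um) = mixflux f g thp up - mixflux f g thm um)
    by (unfold lambda; field; lra).
  assert (M1 : mixflux df dg thp up * (up - um) <= lambda * (up - um))
    by (apply Rmult_le_compat_r; lra).
  assert (M2 : lambda * (up - um) <= mixflux df dg thm um * (up - um))
    by (apply Rmult_le_compat_r; lra).
  rewrite Hl in M1, M2. unfold mixflux in *.
  pose proof (Hfg um). pose proof (Hfg up).
  destruct Hthm as [-> | ->]; destruct Hthp as [-> | ->]; nra.
Qed.
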